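(* Let $S$ be a strongly $E^*$-unitary inverse semigroup with pure grading $\varphi:S^\times\to\mathbb F[\mathcal A]$ such that $E_{st}\subseteq E_s$ whenever $|st|=|s|+|t|$, and let $R$ be a commutative unital ring. For each $a\in\mathcal A$ let $C_a\subseteq E_a$ be such that every $x\in E_a$ satisfies $x\le y$ for some $y\in C_a$, and let $C_{a^{-1}}\subseteq E_{a^{-1}}$ satisfy the analogous condition. Then $L_R(S,\varphi)$ is generated as an $R$-algebra by $$\{x\delta_e\}_{x\in E}\cup\{x\delta_a\}_{a\in\mathcal A,\,x\in C_a}\cup\{x\delta_{a^{-1}}\}_{a\in\mathcal A,\,x\in C_{a^{-1}}}.$$
   Context: $S$ is an inverse semigroup with zero, $s^*$ the unique inverse, $E$ the idempotents (meet semilattice with $x\wedge y=xy$, least element $0$), $S^\times=S\setminus\{0\}$, $E^\times=E\setminus\{0\}$. A pure grading is a map $\varphi:S^\times\to G$ to a group with $\varphi(ab)=\varphi(a)\varphi(b)$ whenever $ab\ne0$ and $\varphi^{-1}(1_G)=E^\times$. For $g\in G$, $E_g=\{x\in E: x\le ss^*$ for some $s$ with $\varphi(s)=g\}$ if $\varphi^{-1}(g)\ne\emptyset$, else $\{0\}$; $\phi_g:E_{g^{-1}}\to E_g$, $x\mapsto sxs^*$ ($\varphi(s)=g$, $x\le s^*s$). $|\cdot|$ is reduced word length in the free group $\mathbb F[\mathcal A]$; $e$ its identity. For a meet semilattice $P$ with $0$: a filter is a subset $F$, $\emptyset\ne F\ne P$, closed upwards and under meets; $F(P)$ has topology generated by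 $\{F:x\in F\}$; tight filters $T(P)$ are the closure of the ultrafilters; $V^P_{(x:x_1,\dots,x_n)}=\{\xi\in T(P):x\in\xi, x_i\notin\xi\}$, $V_x=V_{(x:)}$; $\mathcal T_c(P)$ is the generalized Boolean algebra of compact open subsets of $T(P)$. $\mathcal T_c(E_g)$ is identified with the ideal of $\mathcal T_c(E)$ of compact open sets contained in $\bigcup_{x\in E_g}V^E_x$, and $\hat\phi_g:\mathcal T_c(E_{g^{-1}})\to\mathcal T_c(E_g)$ is the isomorphism induced by $\phi_g$; $\Phi=(\{\mathcal T_c(E_g)\},\{\hat\phi_g\})$ is a partial action. For a partial action $\Phi=(\{\mathcal I_t\},\{\phi_t\})$ on a generalized Boolean algebra $\mathcal B$: $\mathrm{Lc}(R,\mathcal B)$ is the $R$-algebra of functions $f:R\setminus\{0\}\to\mathcal B$ with pairwise disjoint values, almost all $0$, viewed as $\sum_r r1_{f(r)}$ (equivalently locally constant compactly supported functions on the Stone dual); $1_U$ sends $1\mapsto U$, else $0$; $\mathrm{Lc}(R,\mathcal B)\rtimes_\Phi G$ consists of finite sums $\sum_t f_t\delta_t$, $f_t\in\mathrm{Lc}(R,\mathcal I_t)$, with $(a\delta_s)(b\delta_t)=\tilde\phi_s(\tilde\phi_{s^{-1}}(a)b)\delta_{st}$, $\tilde\phi_t(f)=\phi_t\circ f$. $L_R(S,\varphi):=\mathrm{Lc}(R,\mathcal T_c(E))\rtimes_\Phi G$, and for $x\in E_g$, $x\delta_g:=1_{V_x}\delta_g$. *)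

(* Defs.v *)
From HB Require Import structures.
From mathcomp Require Import all_boot all_algebra.
From Stdlib Require Import ClassicalEpsilon.
Set Implicit Arguments. Unset Strict Implicit. Unset Printing Implicit Defensive.
Import GRing.Theory.

(* Free group F[A] on a set A (with decidable equality), as reduced words *)
(* over the letters (a, true) = a and (a, false) = a^{-1}.                *)

Definition cancels (A : eqType) (l m : A * bool) : bool :=
  (l.1 == m.1) && (l.2 != m.2).

Fixpoint reducedb (A : eqType) (w : seq (A * bool)) : bool :=
  match w with
  | l :: ((m :: _) as w') => ~~ cancels l m && reducedb w'
  | _ => true
  end.

Definition cons_red (A : eqType) (l : A * bool) (w : seq (A * bool)) :=
  match w with
  | m :: w' => if cancels l m then w' else l :: w
  | [::] => [:: l]
  end.

Lemma cons_red_reduced (A : eqType) l (w : seq (A * bool)) :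
  reducedb w -> reducedb (cons_red l w).
Proof.
case: w => [|m w] //=; case: ifP => H.
- by case: w => [|k w] //= /andP[].
- by move=> Hw; rewrite /= H Hw.
Qed.

Lemma foldr_cons_red_reduced (A : eqType) (u v : seq (A * bool)) :
  reducedb v -> reducedb (foldr (@cons_red A) v u).
Proof. by elim: u => //= l u IH Hv; apply: cons_red_reduced; apply: IH. Qed.

Lemma foldl_inv_reduced (A : eqType) (w acc : seq (A * bool)) :
  reducedb acc ->
  reducedb (foldl (fun acc l => cons_red (l.1, ~~ l.2) acc) acc w).
Proof.
by elim: w acc => //= l w IH acc H; apply: IH; apply: cons_red_reduced.
Qed.

Definition FG (A : eqType) := {w : seq (A * bool) | reducedb w}.
HB.instance Definition _ (A : eqType) := Equality.copy (FG A) {w : seq (A * bool) | reducedb w}.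

Definition fg_one (A : eqType) : FG A := exist _ [::] isT.

Definition fg_mul (A : eqType) (u v : FG A) : FG A :=
  exist _ (foldr (@cons_red A) (val v) (val u))
        (foldr_cons_red_reduced (val u) (valP v)).

Definition fg_inv (A : eqType) (u : FG A) : FG A :=
  exist _ (foldl (fun acc l => cons_red (l.1, ~~ l.2) acc) [::] (val u))
        (foldl_inv_reduced (val u) (isT : reducedb [::])).

Definition fg_gen (A : eqType) (a : A) : FG A := exist _ [:: (a, true)] isT.
Definition fg_geninv (A : eqType) (a : A) : FG A := exist _ [:: (a, false)] isT.

Definition fg_len (A : eqType) (g : FG A) : nat := size (val g).

(* regular semigroup with zero whose idempotents commute; sstar s is then *)
(* the unique inverse s^* of s *)
Record invsg := InvSg {
  isg_car :> Type;
  smul : isg_car -> isg_car -> isg_car;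
  szero : isg_car;
  sstar : isg_car -> isg_car;
  smulA : forall a b c, smul a (smul b c) = smul (smul a b) c;
  smul0l : forall a, smul szero a = szero;
  smul0r : forall a, smul a szero = szero;
  sstar_inv1 : forall s, smul (smul s (sstar s)) s = s;
  sstar_inv2 : forall s, smul (smul (sstar s) s) (sstar s) = sstar s;
  sidem_comm : forall e f, smul e e = e -> smul f f = f -> smul e f = smul f e
}.

Definition idem (S : invsg) (x : S) : Prop := smul x x = x.
Definition sle (S : invsg) (x y : S) : Prop := x = smul x y.

(* pure grading phi : S^x -> G (phi is given on all of S; its value at 0 *)
(* plays no role) *)
Definition pure_grading (S : invsg) (G : Type) (gmul : G -> G -> G) (g1 : G)
  (phi : S -> G) : Prop :=
  (forall a b : S, smul a b <> szero S -> phi (smul a b) = gmul (phi a) (phi b)) /\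
  (forall s : S, s <> szero S -> (phi s = g1 <-> idem s)).

Definition is_group (G : Type) (gmul : G -> G -> G) (ginv : G -> G) (g1 : G) :=
  (forall a b c, gmul a (gmul b c) = gmul (gmul a b) c) /\
  (forall a, gmul g1 a = a) /\ (forall a, gmul (ginv a) a = g1).

Definition strongly_Estar_unitary (S : invsg) : Prop :=
  exists (G : Type) (gmul : G -> G -> G) (ginv : G -> G) (g1 : G) (phi : S -> G),
    is_group gmul ginv g1 /\ pure_grading gmul g1 phi.

Definition Eg (S : invsg) (A : eqType) (phi : S -> FG A) (g : FG A) (x : S) : Prop :=
  idem x /\
  (x = szero S \/
   exists s : S, s <> szero S /\ phi s = g /\ sle x (smul s (sstar s))).

Definition is_filter (S : invsg) (F : S -> Prop) : Prop :=
  (forall x, F x -> idem x) /\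
  (exists x, F x) /\
  (exists x, idem x /\ ~ F x) /\
  (forall x y, F x -> idem y -> sle x y -> F y) /\
  (forall x y, F x -> F y -> F (smul x y)).

Definition ultrafilter (S : invsg) (F : S -> Prop) : Prop :=
  is_filter F /\
  forall G : S -> Prop, is_filter G -> (forall x, F x -> G x) -> forall x, G x -> F x.

(* basic open sets of the (patch) topology on filters:                    *)
Definition inB (S : invsg) (xs ys : seq S) (F : S -> Prop) : Prop :=
  (forall x, List.In x xs -> F x) /\ (forall y, List.In y ys -> ~ F y).

(* tight filters = closure of the ultrafilters *)
Definition tight (S : invsg) (F : S -> Prop) : Prop :=
  is_filter F /\
  forall xs ys, inB xs ys F -> exists U, ultrafilter U /\ inB xs ys U.

Definition openT (S : invsg) (O : (S -> Prop) -> Prop) : Prop :=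
  (forall xi, O xi -> tight xi) /\
  forall xi, O xi -> exists xs ys, inB xs ys xi /\
    forall eta, tight eta -> inB xs ys eta -> O eta.

Definition compactT (S : invsg) (K : (S -> Prop) -> Prop) : Prop :=
  forall (I : Type) (O : I -> (S -> Prop) -> Prop),
    (forall i, openT (O i)) ->
    (forall xi, K xi -> exists i, O i xi) ->
    exists s : list I, forall xi, K xi -> exists2 i, List.In i s & O i xi.

Definition Vx (S : invsg) (x : S) : (S -> Prop) -> Prop :=
  fun xi => tight xi /\ xi x.

(* union of V_x, x in E_g: the domain of the ideal T_c(E_g) *)
Definition Dg (S : invsg) (A : eqType) (phi : S -> FG A) (g : FG A) :
  (S -> Prop) -> Prop :=
  fun xi => tight xi /\ exists x, Eg phi g x /\ xi x.

(* the map on tight filters induced by phi_g : E_{g^-1} -> E_g,            *)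
(* theta_g(xi) = upward closure of phi_g(xi /\ E_{g^-1}),                 *)
(* phi_g(x) = s x s^* with phi(s) = g, x <= s^* s                          *)
Definition theta (S : invsg) (A : eqType) (phi : S -> FG A) (g : FG A)
  (xi : S -> Prop) : S -> Prop :=
  fun y => idem y /\ exists x s, xi x /\ s <> szero S /\ phi s = g /\
    sle x (smul (sstar s) s) /\ sle (smul (smul s x) (sstar s)) y.

Definition pdec (P : Prop) : bool :=
  if excluded_middle_informative P then true else false.

Definition ind (S : invsg) (R : comPzRingType) (U : (S -> Prop) -> Prop) :
  (S -> Prop) -> R := fun xi => if pdec (U xi) then 1%R else 0%R.

Definition Lc_in (S : invsg) (A : eqType) (phi : S -> FG A) (R : comPzRingType)
  (t : FG A) (f : (S -> Prop) -> R) : Prop :=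
  exists l : seq (R * ((S -> Prop) -> Prop)),
    (forall p, List.In p l ->
       compactT p.2 /\ openT p.2 /\ forall xi, p.2 xi -> Dg phi t xi) /\
    forall xi, f xi = (\sum_(p <- l) p.1 * ind R p.2 xi)%R.

Definition tphi (S : invsg) (A : eqType) (phi : S -> FG A) (R : comPzRingType)
  (g : FG A) (f : (S -> Prop) -> R) : (S -> Prop) -> R :=
  fun xi => if pdec (Dg phi g xi) then f (theta phi (fg_inv g) xi) else 0%R.

(* elements of L_R(S, phi) as formal finite sums  sum f_t delta_t *)
Definition LRelt (S : invsg) (A : eqType) (R : comPzRingType) :=
  seq (FG A * ((S -> Prop) -> R)).

Definition LR_valid (S : invsg) (A : eqType) (phi : S -> FG A) (R : comPzRingType)
  (z : LRelt S A R) : Prop :=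
  forall p, List.In p z -> Lc_in phi p.1 p.2.

(* the element of the crossed product represented by a formal sum:         *)
(* its coefficient f_t at delta_t                                           *)
Definition LR_eval (S : invsg) (A : eqType) (R : comPzRingType)
  (z : LRelt S A R) : FG A -> (S -> Prop) -> R :=
  fun t xi => (\sum_(p <- z | p.1 == t) p.2 xi)%R.

Definition LR_add (S : invsg) (A : eqType) (R : comPzRingType)
  (z w : LRelt S A R) : LRelt S A R := z ++ w.

Definition LR_scale (S : invsg) (A : eqType) (R : comPzRingType)
  (r : R) (z : LRelt S A R) : LRelt S A R :=
  [seq (p.1, fun xi => (r * p.2 xi)%R) | p <- z].

(* (a delta_s)(b delta_t) = tphi_s (tphi_{s^-1}(a) b) delta_{st} *)
Definition LR_mul (S : invsg) (A : eqType) (phi : S -> FG A) (R : comPzRingType)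
  (z w : LRelt S A R) : LRelt S A R :=
  [seq (fg_mul p.1 q.1,
        tphi phi p.1 (fun xi => (tphi phi (fg_inv p.1) p.2 xi * q.2 xi)%R))
  | p <- z, q <- w].

Inductive generated (S : invsg) (A : eqType) (phi : S -> FG A) (R : comPzRingType)
  (X : LRelt S A R -> Prop) : LRelt S A R -> Prop :=
| gen_base z : X z -> generated phi X z
| gen_zero : generated phi X [::]
| gen_add z w : generated phi X z -> generated phi X w ->
    generated phi X (LR_add z w)
| gen_scale r z : generated phi X z -> generated phi X (LR_scale r z)
| gen_mul z w : generated phi X z -> generated phi X w ->
    generated phi X (LR_mul phi z w).

Definition xdelta (S : invsg) (A : eqType) (R : comPzRingType) (x : S) (g : FG A) :
  LRelt S A R := [:: (g, ind R (Vx x))].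

Definition LR_gens (S : invsg) (A : eqType) (R : comPzRingType)
  (C Cinv : A -> S -> Prop) (z : LRelt S A R) : Prop :=
  (exists x, idem x /\ z = xdelta R x (fg_one A)) \/
  (exists a x, C a x /\ z = xdelta R x (fg_gen a)) \/
  (exists a x, Cinv a x /\ z = xdelta R x (fg_geninv a)).

(* Main.v *)
Require Import Defs.
From HB Require Import structures.
From mathcomp Require Import all_boot all_algebra.
From Stdlib Require Import ClassicalEpsilon FunctionalExtensionality PropExtensionality.
Set Implicit Arguments. Unset Strict Implicit. Unset Printing Implicit Defensive.
Import GRing.Theory.

Section FGlaws.
Variable A : eqType.
Notation W := (seq (A * bool)).
Definition iota_l (l : A * bool) : A * bool := (l.1, ~~ l.2).
Definition act (u v : W) : W := foldr (@cons_red A) v u.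

Lemma cancels_eq (l m : A * bool) : cancels l m -> m = iota_l l.
Proof.
case: l m => [a b] [c d]; rewrite /cancels /iota_l /= => /andP[/eqP -> H].
by case: b d H => [] [].
Qed.

Lemma cancels_iota l : cancels l (iota_l l).
Proof. by rewrite /cancels /iota_l /= eqxx; case: l.2. Qed.

Lemma iotaK l : iota_l (iota_l l) = l.
Proof. by case: l => a b; rewrite /iota_l /= negbK. Qed.

Lemma cons_redK l (w : W) : reducedb w -> cons_red l (cons_red (iota_l l) w) = w.
Proof.
case: w => [|m w] /=.
  by rewrite cancels_iota.
case: ifP => Hc.
  move/cancels_eq: Hc; rewrite iotaK => ->.
  case: w => [|k w] //= /andP[Hk _]; by rewrite (negbTE Hk).
by move=> _; rewrite /= cancels_iota.
Qed.

Lemma act_reduced u v : reducedb v -> reducedb (act u v).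
Proof. exact: foldr_cons_red_reduced. Qed.

Lemma act_cons_red l v w : reducedb v -> reducedb w ->
  act (cons_red l v) w = cons_red l (act v w).
Proof.
case: v => [|m v] //= Hv Hw.
case: ifP => Hc /=.
  have Hv' : reducedb v by case: v Hv => // k v /andP[].
  move/cancels_eq: Hc => ->.
  by rewrite cons_redK //; apply: act_reduced.
by [].
Qed.

Lemma act_cat u1 u2 v : act (u1 ++ u2) v = act u1 (act u2 v).
Proof. by rewrite /act foldr_cat. Qed.

Lemma act_assoc u v w : reducedb v -> reducedb w ->
  act (act u v) w = act u (act v w).
Proof.
elim: u => //= l u IH Hv Hw.
by rewrite act_cons_red ?IH //; apply: act_reduced.
Qed.

Lemma act_nil u : reducedb u -> act u [::] = u.
Proof.
elim: u => //= l u IH Hu.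
have Hu' : reducedb u by case: u Hu IH => // k u /andP[].
rewrite IH //; case: u Hu {IH Hu'} => //= k u /andP[Hk _].
by rewrite (negbTE Hk).
Qed.

Definition finv_step (acc : W) (l : A * bool) := cons_red (l.1, ~~ l.2) acc.

Lemma act_foldl u acc v : reducedb acc -> reducedb v ->
  act (foldl finv_step acc u) v = act (map iota_l (rev u)) (act acc v).
Proof.
elim: u acc => //= l u IH acc Hacc Hv.
rewrite IH //; last by apply: cons_red_reduced.
rewrite act_cons_red // rev_cons map_rcons -cats1 act_cat //.
Qed.

Lemma act_inv_l u w : reducedb w -> act (map iota_l (rev u)) (act u w) = w.
Proof.
elim: u => //= l u IH Hw.
rewrite rev_cons map_rcons -cats1 act_cat /= -{2}(iotaK l) cons_redK ?IH //.
exact: act_reduced.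
Qed.

Lemma act_inv_r u w : reducedb w -> act u (act (map iota_l (rev u)) w) = w.
Proof.
elim: u w => //= l u IH w Hw.
rewrite rev_cons map_rcons -cats1 act_cat /= IH; first exact: cons_redK.
exact: cons_red_reduced.
Qed.

Lemma fg_eq (g h : FG A) : val g = val h -> g = h.
Proof. exact: val_inj. Qed.

Lemma fg_mulA (g h k : FG A) : fg_mul g (fg_mul h k) = fg_mul (fg_mul g h) k.
Proof. apply: fg_eq => /=; rewrite -/(act _ _) -/(act _ _) -/(act _ _) -/(act _ _).
by rewrite act_assoc //; [exact: (valP h)|exact: (valP k)].
Qed.

Lemma fg_mul1l (g : FG A) : fg_mul (fg_one A) g = g.
Proof. by apply: fg_eq. Qed.

Lemma fg_mul1r (g : FG A) : fg_mul g (fg_one A) = g.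
Proof. apply: fg_eq => /=; exact: (act_nil (valP g)). Qed.

Lemma fg_mulVl (g : FG A) : fg_mul (fg_inv g) g = fg_one A.
Proof.
apply: fg_eq => /=; rewrite -/(act _ _).
rewrite (_ : foldl _ _ _ = foldl finv_step [::] (val g)) //.
rewrite act_foldl //; last exact: (valP g).
have := act_inv_l (val g) (isT : reducedb [::]); rewrite act_nil //; exact: (valP g).
Qed.

Lemma fg_mulVr (g : FG A) : fg_mul g (fg_inv g) = fg_one A.
Proof.
apply: fg_eq => /=; rewrite -/(act _ _).
rewrite (_ : foldl _ _ _ = foldl finv_step [::] (val g)) //.
rewrite -(act_nil (foldl_inv_reduced (val g) (isT : reducedb [::]))).
rewrite act_foldl // /=.
by rewrite act_inv_r.
Qed.

Lemma fg_mulKl (g h : FG A) : fg_mul (fg_inv g) (fg_mul g h) = h.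
Proof. by rewrite fg_mulA fg_mulVl fg_mul1l. Qed.

Lemma fg_mulKr (g h : FG A) : fg_mul g (fg_mul (fg_inv g) h) = h.
Proof. by rewrite fg_mulA fg_mulVr fg_mul1l. Qed.

Lemma fg_inv_uniq (g h : FG A) : fg_mul g h = fg_one A -> h = fg_inv g.
Proof.
move=> H; rewrite -(fg_mulKl g h) H fg_mul1r //.
Qed.

Lemma fg_mul_eq (s q t : FG A) : (fg_mul s q == t) = (q == fg_mul (fg_inv s) t).
Proof.
apply/eqP/eqP => [<-|->]; by rewrite ?fg_mulKl ?fg_mulKr.
Qed.

End FGlaws.

Section ISG.
Variable S : invsg.
Local Notation "a · b" := (@smul S a b) (at level 40, left associativity).
Local Notation "a °" := (@sstar S a) (at level 2, format "a °").
Local Notation z := (szero S).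

Lemma mA a b c : a · (b · c) = a · b · c. Proof. exact: smulA. Qed.
Lemma inv1 s : s · s° · s = s. Proof. exact: sstar_inv1. Qed.
Lemma inv2 s : s° · s · s° = s°. Proof. exact: sstar_inv2. Qed.
Lemma m0l a : z · a = z. Proof. exact: smul0l. Qed.
Lemma m0r a : a · z = z. Proof. exact: smul0r. Qed.

Lemma icomm e f : idem e -> idem f -> e · f = f · e.
Proof. exact: sidem_comm. Qed.

Lemma icommx x e f : idem e -> idem f -> x · e · f = x · f · e.
Proof. by move=> He Hf; rewrite -!mA (icomm He Hf). Qed.

Lemma iabs x e : idem e -> x · e · e = x · e.
Proof. by move=> He; rewrite -mA He. Qed.

Lemma idem_ss s : idem (s · s°).
Proof. by rewrite /idem mA inv1. Qed.
Lemma idem_ss' s : idem (s° · s).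
Proof. by rewrite /idem mA inv2. Qed.

Lemma LI1 x s : x · s · s° · s = x · s.
Proof. by rewrite -!mA (mA s s° s) inv1. Qed.
Lemma LI2 x s : x · s° · s · s° = x · s°.
Proof. by rewrite -!mA (mA s° s s°) inv2. Qed.
Lemma LC x e f : idem e -> idem f -> x · e · f = x · f · e.
Proof. by move=> He Hf; rewrite -!mA (icomm He Hf). Qed.
Lemma LA x e : idem e -> x · e · e = x · e.
Proof. by move=> He; rewrite -mA He. Qed.

Lemma inv_uniq a b : a · b · a = a -> b · a · b = b -> b = a°.
Proof.
move=> H1 H2.
have Ixa : idem (b · a) by rewrite /idem mA H2.
have Iya : idem (a° · a) by exact: idem_ss'.
have Iax : idem (a · b) by rewrite /idem mA H1.
have Iay : idem (a · a°) by exact: idem_ss.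
have E1 : b = a° · a · b.
  transitivity (b · a · b); first by rewrite H2.
  transitivity ((b · a) · (a° · a) · b); first by rewrite !mA LI1.
  transitivity ((a° · a) · (b · a) · b); first by rewrite (icomm Ixa Iya).
  by rewrite -(mA (a° · a) (b · a) b) H2.
have E2 : a° = a° · a · b.
  transitivity (a° · a · a°); first by rewrite inv2.
  transitivity (a° · (a · b · a) · a°); first by rewrite H1.
  transitivity (a° · (a · b) · (a · a°)); first by rewrite !mA.
  transitivity (a° · (a · a°) · (a · b)); first by rewrite -!(mA a°) (icomm Iax Iay).
  by rewrite !mA inv2.
by rewrite E1 -E2.
Qed.

Lemma star_star a : a°° = a.
Proof. by symmetry; apply: inv_uniq; [exact: inv2|exact: inv1]. Qed.

Lemma star_idem e : idem e -> e° = e.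
Proof. by move=> He; symmetry; apply: inv_uniq; rewrite /idem in He; rewrite !He. Qed.

Lemma star_mul a b : (a · b)° = b° · a°.
Proof.
symmetry; apply: inv_uniq.
- transitivity (a · ((b · b°) · (a° · a)) · b); first by rewrite !mA.
  rewrite (icomm (idem_ss b) (idem_ss' a)).
  by rewrite !mA LI1 inv1.
- transitivity (b° · ((a° · a) · (b · b°)) · a°); first by rewrite !mA.
  rewrite -(icomm (idem_ss b) (idem_ss' a)).
  by rewrite !mA LI2 inv2.
Qed.

Lemma star0 : z° = z.
Proof. by apply: star_idem; rewrite /idem m0l. Qed.

Lemma idem0 : idem z. Proof. by rewrite /idem m0l. Qed.

Lemma idemM e f : idem e -> idem f -> idem (e · f).
Proof.
move=> He Hf; rewrite /idem.
transitivity (e · (f · e) · f); first by rewrite !mA.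
by rewrite (icomm Hf He) !mA LA // He.
Qed.

Lemma nz_star s : s <> z -> s° <> z.
Proof. by move=> Hs H; apply: Hs; rewrite -(inv1 s) -mA H m0l m0r. Qed.
Lemma nz_ss s : s <> z -> s · s° <> z.
Proof. by move=> Hs H; apply: Hs; rewrite -(inv1 s) H m0l. Qed.
Lemma nz_ss' s : s <> z -> s° · s <> z.
Proof. by move=> Hs H; apply: Hs; rewrite -(inv1 s) -mA H m0r. Qed.

Lemma sle_refl (e : S) : idem e -> sle e e. Proof. by move=> He; rewrite /sle He. Qed.
Lemma sle_trans (x y w : S) : sle x y -> sle y w -> sle x w.
Proof. by rewrite /sle => Hxy Hyw; rewrite Hxy {1}Hyw mA -Hxy. Qed.
Lemma sle_mulr e f : idem e -> idem f -> sle (e · f) e.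
Proof. by move=> He Hf; rewrite /sle -mA (icomm Hf He) mA He. Qed.
Lemma sle_mull e f : idem e -> idem f -> sle (e · f) f.
Proof. by move=> He Hf; rewrite /sle -mA Hf. Qed.
Lemma sle_meet x e f : sle x e -> sle x f -> sle x (e · f).
Proof. by rewrite /sle => He Hf; rewrite mA -He -Hf. Qed.
Lemma sle_0 (e : S) : sle z e. Proof. by rewrite /sle m0l. Qed.
Lemma sle_z e : sle e z -> e = z. Proof. by rewrite /sle m0r. Qed.


Lemma conj_idem r e : idem e -> idem (r · e · r°).
Proof.
move=> He; rewrite /idem.
transitivity (r · (e · (r° · r) · e) · r°); first by rewrite !mA.
by rewrite (icomm He (idem_ss' r)) LA // !mA inv1.
Qed.

Lemma conj_mul r e f : idem e -> idem f -> r · e · r° · (r · f · r°) = r · (e · f) · r°.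
Proof.
move=> He Hf.
transitivity (r · (e · ((r° · r) · f)) · r°); first by rewrite !mA.
by rewrite (icomm (idem_ss' r) Hf) !mA LI2.
Qed.

Lemma conj_mon r e f : idem e -> idem f -> sle e f -> sle (r · e · r°) (r · f · r°).
Proof. by move=> He Hf Hef; rewrite /sle conj_mul // -Hef. Qed.

Lemma conj_back r e : idem e -> sle e (r° · r) -> r° · (r · e · r°) · r = e.
Proof.
move=> He Hle.
transitivity ((r° · r) · e · (r° · r)); first by rewrite !mA.
by rewrite (icomm (idem_ss' r) He) (LA _ (idem_ss' r)) -Hle.
Qed.

Lemma conj_back' r e : idem e -> sle e (r · r°) -> r · (r° · e · r) · r° = e.
Proof.
move=> He Hle; have := @conj_back r° e He; rewrite star_star; exact.
Qed.

Lemma sle_mulx e f x : idem x -> idem f -> sle e f -> sle (e · x) (f · x).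
Proof.
move=> Hx Hf Hef; rewrite /sle.
transitivity (e · (f · x) · x); last by rewrite !mA -(mA e x f) (icomm Hx Hf) !mA.
by rewrite !mA LA // -Hef.
Qed.


Lemma mx2 a b x : idem x -> idem b -> a · x · (b · x) = a · b · x.
Proof.
move=> Hx Hb; rewrite !mA.
by rewrite -(mA (a · x) b x) -(mA a x (b · x)) (mA x b x) -(mA x b) (icomm Hb Hx) (mA x x b) Hx !mA LC.
Qed.

End ISG.

Section Grading.
Variable A : eqType.
Variable S : invsg.
Variable phi : S -> FG A.
Hypothesis Hgr : pure_grading (@fg_mul A) (fg_one A) phi.
Local Notation "a · b" := (@smul S a b) (at level 40, left associativity).
Local Notation "a °" := (@sstar S a) (at level 2, format "a °").
Local Notation z := (szero S).

Lemma phi_mul a b : a · b <> z -> phi (a · b) = fg_mul (phi a) (phi b).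
Proof. by case: Hgr => H _; apply: H. Qed.

Lemma phi_idem e : e <> z -> idem e -> phi e = fg_one A.
Proof. by case: Hgr => _ H He Hi; apply/(H e He). Qed.

Lemma phi1_idem e : e <> z -> phi e = fg_one A -> idem e.
Proof. by case: Hgr => _ H He Hi; apply/(H e He). Qed.

Lemma phi_star s : s <> z -> phi s° = fg_inv (phi s).
Proof.
move=> Hs; apply: fg_inv_uniq.
rewrite -phi_mul; last exact: nz_ss.
apply: phi_idem; [exact: nz_ss|exact: idem_ss].
Qed.

Lemma CORE q s v : idem v -> v <> z -> sle v (q° · q) -> sle v (s · s°) ->
  fg_mul (phi q) (phi s) = fg_one A -> q · v · q° = s° · v · s.
Proof.
move=> Hv Hvz Hv1 Hv2 Hphi.
have Hqq : idem (q° · q) by exact: idem_ss'.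
set a := q · v · s.
have Ea : a° = s° · v · q° by rewrite /a !star_mul (star_idem Hv) mA.
have E1 : a · a° = q · v · q°.
  rewrite Ea /a !mA -(mA (q · v) s s°) -(mA q v (s · s°)) -Hv2.
  by rewrite LA.
have E2 : a° · a = s° · v · s.
  rewrite Ea /a !mA -(mA (s° · v) q° q) -(mA s° v (q° · q)) -Hv1.
  by rewrite LA.
have Hnz : a <> z.
  move=> Ha; apply: Hvz.
  have : q° · (a · a°) · q = z by rewrite Ha m0l m0r m0l.
  rewrite E1.
  have -> : q° · (q · v · q°) · q = (q° · q) · v · (q° · q) by rewrite !mA.
  by rewrite -(icomm Hv Hqq) LA // -Hv1.
have Hqv : q · v <> z by move=> H; apply: Hnz; rewrite /a H m0l.
have Hia : idem a.
  apply: phi1_idem => //.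
  rewrite /a phi_mul // phi_mul // (phi_idem Hvz Hv) fg_mul1r //.
have Ha' : a° = a by exact: star_idem.
by rewrite -E1 -E2 Ha'.
Qed.

End Grading.

Lemma pdecT (P : Prop) : P -> pdec P = true.
Proof. by rewrite /pdec; case: excluded_middle_informative. Qed.
Lemma pdecF (P : Prop) : ~ P -> pdec P = false.
Proof. by rewrite /pdec; case: excluded_middle_informative. Qed.

Section Filters.
Variable A : eqType.
Variable S : invsg.
Variable phi : S -> FG A.
Hypothesis Hgr : pure_grading (@fg_mul A) (fg_one A) phi.
Local Notation "a · b" := (@smul S a b) (at level 40, left associativity).
Local Notation "a °" := (@sstar S a) (at level 2, format "a °").
Local Notation z := (szero S).

Lemma f_idem (F : S -> Prop) y : is_filter F -> F y -> idem y.
Proof. by case=> H _ /H. Qed.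
Lemma f_up (F : S -> Prop) y y' : is_filter F -> F y -> idem y' -> sle y y' -> F y'.
Proof. by case=> _ [_ [_ [H _]]]; apply: H. Qed.
Lemma f_meet (F : S -> Prop) y y' : is_filter F -> F y -> F y' -> F (y · y').
Proof. by case=> _ [_ [_ [_ H]]]; apply: H. Qed.
Lemma f_nz (F : S -> Prop) : is_filter F -> ~ F z.
Proof.
move=> HF Fz; case: (HF) => _ [_ [[y [Hy NFy]] _]]; apply: NFy.
exact: (f_up HF Fz Hy (sle_0 y)).
Qed.

Definition Phi (s x : S) (F : S -> Prop) : S -> Prop :=
  fun y => idem y /\ F (s · y · s° · x).

Lemma idem_conj' s x : idem x -> idem (s° · x · s).
Proof. by move=> Hx; have := conj_idem s° Hx; rewrite star_star. Qed.

Lemma Phi_w (F : S -> Prop) s x : is_filter F -> F x -> sle x (s · s°) ->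
  Phi s x F (s° · x · s).
Proof.
move=> HF Fx Hxs; have Hx := f_idem HF Fx.
split; first exact: idem_conj'.
by rewrite conj_back' // Hx.
Qed.

Lemma Phi_filter (F : S -> Prop) s x : is_filter F -> F x -> sle x (s · s°) ->
  is_filter (Phi s x F).
Proof.
move=> HF Fx Hxs; have Hx := f_idem HF Fx.
split; first by move=> y [].
split; first by exists (s° · x · s); apply: Phi_w.
split.
  exists z; split; first exact: idem0.
  by case=> _; rewrite m0r m0l m0l; apply: f_nz.
split.
  move=> y y' [Hy Fy] Hy' Hyy'; split => //.
  apply: (f_up HF Fy); first by apply: idemM => //; apply: conj_idem.
  by apply: sle_mulx => //; [apply: conj_idem | apply: conj_mon].
move=> y y' [Hy Fy] [Hy' Fy']; split; first exact: idemM.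
have := f_meet HF Fy Fy'.
by rewrite mx2 // ?conj_mul //; apply: conj_idem.
Qed.

Lemma theta_char (F : S -> Prop) s x y : is_filter F -> F x -> sle x (s · s°) ->
  s <> z -> (theta phi (fg_inv (phi s)) F y <-> Phi s x F y).
Proof.
move=> HF Fx Hxs Hs; have Hx := f_idem HF Fx; split.
- case=> Hy [u [q [Fu [Hq [Hpq [Huq Hqy]]]]]]; split => //.
  have Hu := f_idem HF Fu.
  have Fv : F (u · x) by exact: f_meet.
  have Hv : idem (u · x) by exact: idemM.
  have Hvz : u · x <> z by move=> E; apply: (f_nz HF); rewrite -E.
  have Hv1 : sle (u · x) (q° · q) := sle_trans (sle_mulr Hu Hx) Huq.
  have Hv2 : sle (u · x) (s · s°) := sle_trans (sle_mull Hu Hx) Hxs.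
  have Hp1 : fg_mul (phi q) (phi s) = fg_one A by rewrite Hpq fg_mulVl.
  have E := CORE Hgr Hv Hvz Hv1 Hv2 Hp1.
  have Ev : u · x = s · (q · (u · x) · q°) · s° by rewrite E conj_back'.
  have Hle1 : sle (q · (u · x) · q°) y.
    apply: sle_trans Hqy; apply: conj_mon => //; exact: sle_mulr.
  have Hle2 : sle (u · x) (s · y · s°).
    rewrite {1}Ev; apply: conj_mon => //; exact: conj_idem.
  apply: (f_up HF Fv); first by apply: idemM => //; apply: conj_idem.
  apply: sle_meet => //; exact: sle_mull.
- case=> Hy Fsy; split => //.
  exists (s · y · s° · x), s°; split => //; split; first exact: nz_star.
  split; first exact: phi_star.
  rewrite star_star; split.
    apply: sle_trans Hxs; apply: sle_mull => //; exact: conj_idem.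
  have -> : s° · (s · y · s° · x) · s = y · (s° · x · s).
    transitivity ((s° · s) · y · (s° · x · s)); first by rewrite !mA.
    by rewrite (icomm (idem_ss' s) Hy) !mA LI2.
  apply: sle_mulr => //; exact: idem_conj'.
Qed.

Lemma Phi_ultra (U : S -> Prop) s x : ultrafilter U -> U x -> sle x (s · s°) ->
  ultrafilter (Phi s x U).
Proof.
move=> [HU Umax] Ux Hxs; have Hx := f_idem HU Ux.
split; first exact: Phi_filter.
move=> G HG Hsub g Gg.
set w := s° · x · s.
have Iw : idem w by exact: idem_conj'.
have Gw : G w by apply: Hsub; apply: Phi_w.
have Hws : sle w (s° · s°°).
  by rewrite star_star /sle /w !mA LI1.
have HH := Phi_filter HG Gw Hws.
have Hws' := Hws; rewrite star_star in Hws'.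
have HUH : forall u, U u -> Phi s° w G u.
  move=> u Uu; have Hu := f_idem HU Uu; split => //.
  apply: Hsub; split; first by apply: idemM => //; apply: conj_idem.
  rewrite star_star.
  have -> : s · (s° · u · s · w) · s° · x = u · x.
    transitivity ((s · s°) · u · (s · s°) · (x · (s · s°)) · x); first by rewrite /w !mA.
    rewrite -Hxs LA // (icomm (idem_ss s) Hu) (LA _ (idem_ss s)).
    by rewrite (LC _ (idem_ss s) Hx) -mA -Hxs.
  exact: f_meet.
have Hg := f_idem HG Gg.
split => //.
apply: (Umax _ HH HUH); split; first by apply: idemM => //; apply: conj_idem.
rewrite star_star.
have -> : s° · (s · g · s° · x) · s · w = g · w.
  transitivity ((s° · s) · g · w · w); first by rewrite /w !mA.
  rewrite LA // (icomm (idem_ss' s) Hg) -mA.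
  by rewrite (icomm (idem_ss' s) Iw) -Hws'.
exact: f_meet.
Qed.

Lemma Phi_tight (F : S -> Prop) s x : tight F -> F x -> sle x (s · s°) ->
  tight (Phi s x F).
Proof.
move=> [HF Ftight] Fx Hxs; have Hx := f_idem HF Fx.
split; first exact: Phi_filter.
move=> xs ys [Hxs' Hys'].
pose psi y := s · y · s° · x.
pose psi' y := if pdec (idem y) then psi y else z.
have Hin : inB (x :: List.map psi xs) (List.map psi' ys) F.
  split.
    move=> y [<- //|/List.in_map_iff [y0 [<- Hy0]]].
    by case: (Hxs' _ Hy0).
  move=> y /List.in_map_iff [y0 [<- Hy0]].
  rewrite /psi'; case: (classic (idem y0)) => Hi.
    by rewrite pdecT // => Fy; apply: (Hys' _ Hy0).
  by rewrite pdecF //; apply: f_nz.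
case: (Ftight _ _ Hin) => U [HU [HUx HUy]].
exists (Phi s x U); split.
  apply: Phi_ultra => //; first by apply: HUx; left.
split.
  move=> y Hy; split; first by case: (Hxs' _ Hy).
  by apply: HUx; right; apply: List.in_map.
move=> y Hy [Hi Uy]; apply: (HUy (psi' y)); first exact: List.in_map.
by rewrite /psi' pdecT.
Qed.

End Filters.

Local Open Scope ring_scope.

Section Ind.
Variable S : invsg.
Variable R : comPzRingType.
Local Notation "a · b" := (@smul S a b) (at level 40, left associativity).
Local Notation z := (szero S).

Lemma indT (U : (S -> Prop) -> Prop) xi : U xi -> ind R U xi = 1.
Proof. by move=> H; rewrite /ind pdecT. Qed.
Lemma indF (U : (S -> Prop) -> Prop) xi : ~ U xi -> ind R U xi = 0.
Proof. by move=> H; rewrite /ind pdecF. Qed.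
Lemma ind_eq (U U' : (S -> Prop) -> Prop) xi xi' : (U xi <-> U' xi') ->
  ind R U xi = ind R U' xi'.
Proof.
move=> H; case: (classic (U xi)) => Hx.
  by rewrite !indT //; apply/H.
by rewrite !indF // => /H.
Qed.

Ltac ind_cases H1 H2 :=
  rewrite ?(indT H1) ?(indF H1) ?(indT H2) ?(indF H2);
  first [ rewrite [in RHS]indT; last by simpl; tauto
        | rewrite [in RHS]indF; last by simpl; tauto ];
  rewrite ?mulr1 ?mulr0 ?mul0r ?addr0 ?add0r ?subr0 ?subrr ?addrK //.

Lemma ind_and (U U' : (S -> Prop) -> Prop) xi :
  ind R U xi * ind R U' xi = ind R (fun e => U e /\ U' e) xi.
Proof.
by case: (classic (U xi)) => H1; case: (classic (U' xi)) => H2; ind_cases H1 H2.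
Qed.

Lemma ind_diff (U U' : (S -> Prop) -> Prop) xi :
  ind R U xi - ind R U xi * ind R U' xi = ind R (fun e => U e /\ ~ U' e) xi.
Proof.
case: (classic (U xi)) => H1; case: (classic (U' xi)) => H2.
- rewrite (indT H1) (indT H2) mulr1 subrr indF //; tauto.
- rewrite (indT H1) (indF H2) mulr0 subr0 indT //.
- rewrite (indF H1) mul0r subr0 indF //; tauto.
- rewrite (indF H1) mul0r subr0 indF //; tauto.
Qed.

Lemma ind_or (U U' : (S -> Prop) -> Prop) xi :
  ind R U xi + ind R U' xi - ind R U xi * ind R U' xi = ind R (fun e => U e \/ U' e) xi.
Proof.
case: (classic (U xi)) => H1; case: (classic (U' xi)) => H2.
- rewrite (indT H1) (indT H2) mulr1 addrK indT //; tauto.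
- rewrite (indT H1) (indF H2) mulr0 subr0 addr0 indT //; tauto.
- rewrite (indF H1) (indT H2) mul0r subr0 add0r indT //; tauto.
- rewrite (indF H1) (indF H2) mul0r subr0 addr0 indF //; tauto.
Qed.

Lemma tight_filter (xi : S -> Prop) : tight xi -> is_filter xi.
Proof. by case. Qed.

Lemma ind_V0 (xi : S -> Prop) : ind R (Vx z) xi = 0.
Proof. by apply: indF => -[/tight_filter H]; apply: f_nz. Qed.

Lemma ind_VM x y xi : idem x -> idem y ->
  ind R (Vx x) xi * ind R (Vx y) xi = ind R (Vx (x · y)) xi.
Proof.
move=> Hx Hy; rewrite ind_and; apply: ind_eq; split.
  by case=> -[T Fx] [_ Fy]; split => //; apply: f_meet => //; apply: tight_filter.
case=> T Fxy; have HF := tight_filter T.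
split; split => //; apply: (f_up HF Fxy) => //.
  exact: sle_mulr.
exact: sle_mull.
Qed.

Lemma ind_Vnidem (y : S) xi : ~ idem y -> ind R (Vx y) xi = 0.
Proof. by move=> Hy; apply: indF => -[/tight_filter H Fy]; apply: Hy; apply: f_idem Fy. Qed.

End Ind.

Section Conj.
Variable A : eqType.
Variable S : invsg.
Variable phi : S -> FG A.
Hypothesis Hgr : pure_grading (@fg_mul A) (fg_one A) phi.
Variable R : comPzRingType.
Local Notation "a · b" := (@smul S a b) (at level 40, left associativity).
Local Notation "a °" := (@sstar S a) (at level 2, format "a °").
Local Notation z := (szero S).

Lemma conj_sle r w : idem w -> sle w (r° · r) -> sle (r · w · r°) (r · r°).
Proof.
move=> Hw Hwr; have := conj_mon r Hw (idem_ss' r) Hwr.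
by rewrite !mA inv1.
Qed.

Lemma tphi_conj r w : r <> z -> idem w -> sle w (r° · r) ->
  forall xi, tphi phi (phi r) (ind R (Vx w)) xi = ind R (Vx (r · w · r°)) xi.
Proof.
move=> Hr Hw Hwr xi; rewrite /tphi.
have Hrw := conj_sle Hw Hwr.
case: (classic (Dg phi (phi r) xi)) => HD; last first.
  rewrite pdecF // indF // => -[T Fx]; apply: HD; split => //.
  exists (r · w · r°); split => //; split; first exact: conj_idem.
  by right; exists r.
rewrite pdecT //; case: (HD) => Txi [x [[Hx Hxc] xix]].
have HF := tight_filter Txi.
case: Hxc => [x0|[s [Hs [Hps Hxs]]]].
  by exfalso; apply: (f_nz HF); rewrite -x0.
have Ht : tight (theta phi (fg_inv (phi r)) xi).
  have -> : theta phi (fg_inv (phi r)) xi = Phi s x xi.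
    apply: functional_extensionality => y; apply: propositional_extensionality.
    rewrite -Hps; exact: theta_char.
  exact: Phi_tight.
apply: ind_eq; split.
- case=> _ [_ [u [q [Fu [Hq [Hpq [Huq Hqy]]]]]]]; split => //.
  have Hu := f_idem HF Fu.
  have Hv : idem (q · u · q°) by exact: conj_idem.
  have Eu : q° · (q · u · q°) · q = u by exact: conj_back.
  have Hvz : q · u · q° <> z.
    move=> E; apply: (f_nz HF); have Uz : u = z by rewrite -Eu E m0r m0l.
    by rewrite -Uz.
  have Hv1 : sle (q · u · q°) (q°° · q°).
    by rewrite star_star; have := conj_mon q Hu (idem_ss' q) Huq; rewrite !mA LI2.
  have Hv2 : sle (q · u · q°) (r° · r°°) by rewrite star_star; exact: sle_trans Hqy Hwr.
  have Hp1 : fg_mul (phi q°) (phi r°) = fg_one A.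
    by rewrite (phi_star Hgr Hq) (phi_star Hgr Hr) Hpq fg_mulVl.
  have := CORE Hgr Hv Hvz Hv1 Hv2 Hp1; rewrite !star_star Eu => Eu'.
  apply: (f_up HF Fu); first exact: conj_idem.
  by rewrite Eu'; apply: conj_mon.
- case=> _ Fx; split => //; split => //.
  exists (r · w · r°), r°; split => //; split; first exact: nz_star.
  split; first exact: phi_star.
  rewrite star_star; split => //.
  by rewrite conj_back //; apply: sle_refl.
Qed.

End Conj.

Local Open Scope ring_scope.

Section LR.
Variable A : eqType.
Variable S : invsg.
Variable phi : S -> FG A.
Variable R : comPzRingType.
Local Notation LRE := (LRelt S A R).

Lemma eval_cat (u w : LRE) t xi : LR_eval (u ++ w) t xi = LR_eval u t xi + LR_eval w t xi.
Proof. by rewrite /LR_eval big_cat. Qed.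

Lemma eval_nil (t : FG A) xi : @LR_eval S A R [::] t xi = 0.
Proof. by rewrite /LR_eval big_nil. Qed.

Lemma eval_scale r (u : LRE) t xi : LR_eval (LR_scale r u) t xi = r * LR_eval u t xi.
Proof. by rewrite /LR_eval /LR_scale big_map mulr_sumr. Qed.

Lemma eval_single (s : FG A) (f : (S -> Prop) -> R) t xi :
  LR_eval [:: (s, f)] t xi = if s == t then f xi else 0.
Proof. by rewrite /LR_eval big_cons big_nil /=; case: (s == t); rewrite ?addr0. Qed.

Lemma eval_cons (s : FG A) (f : (S -> Prop) -> R) (u : LRE) t xi :
  LR_eval ((s, f) :: u) t xi = LR_eval [:: (s, f)] t xi + LR_eval u t xi.
Proof. by rewrite -eval_cat. Qed.

Lemma tphi_ext (g : FG A) (f f' : (S -> Prop) -> R) xi : (forall e, f e = f' e) ->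
  tphi phi g f xi = tphi phi g f' xi.
Proof. by move=> H; rewrite /tphi H. Qed.

Lemma eval_mul1 (s : FG A) (f : (S -> Prop) -> R) (w : LRE) t xi :
  LR_eval (LR_mul phi [:: (s, f)] w) t xi =
  tphi phi s (fun e => tphi phi (fg_inv s) f e * LR_eval w (fg_mul (fg_inv s) t) e) xi.
Proof.
rewrite /LR_mul /= cats0 /LR_eval big_map /=.
rewrite /tphi; case: (pdec _).
  rewrite mulr_sumr; apply: eq_bigl => q /=; exact: fg_mul_eq.
by rewrite big1.
Qed.

End LR.

Local Open Scope ring_scope.

Section Gen.
Variable A : eqType.
Variable S : invsg.
Variable phi : S -> FG A.
Variable R : comPzRingType.
Variables C Cinv : A -> S -> Prop.
Hypothesis Hgr : pure_grading (@fg_mul A) (fg_one A) phi.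
Local Notation "a · b" := (@smul S a b) (at level 40, left associativity).
Local Notation "a °" := (@sstar S a) (at level 2, format "a °").
Local Notation z := (szero S).
Local Notation LRE := (LRelt S A R).

Definition Good (t : FG A) (f : (S -> Prop) -> R) :=
  exists w : LRE, generated phi (@LR_gens S A R C Cinv) w /\
    forall t' xi, LR_eval w t' xi = LR_eval [:: (t, f)] t' xi.

Lemma Good_ext t f f' : (forall xi, f xi = f' xi) -> Good t f -> Good t f'.
Proof.
move=> H [w [Hw E]]; exists w; split => // t' xi.
by rewrite E !eval_single H.
Qed.

Lemma Good_zero t : Good t (fun _ => 0).
Proof.
exists [::]; split; first exact: gen_zero.
by move=> t' xi; rewrite eval_nil eval_single; case: (_ == _).
Qed.

Lemma Good_add t f f' : Good t f -> Good t f' -> Good t (fun xi => f xi + f' xi).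
Proof.
move=> [w [Hw E]] [w' [Hw' E']]; exists (LR_add w w'); split; first exact: gen_add.
move=> t' xi; rewrite /LR_add eval_cat E E' !eval_single.
by case: (_ == _); rewrite ?addr0.
Qed.

Lemma Good_scale t r f : Good t f -> Good t (fun xi => r * f xi).
Proof.
move=> [w [Hw E]]; exists (LR_scale r w); split; first exact: gen_scale.
move=> t' xi; rewrite eval_scale E !eval_single.
by case: (_ == _); rewrite ?mulr0.
Qed.

Lemma Good_step (c : FG A) (Cc : S -> Prop) (t' : FG A) :
  (forall y, Cc y -> @LR_gens S A R C Cinv (xdelta R y c)) ->
  (forall y, Cc y -> Eg phi c y) ->
  (forall x, Eg phi c x -> exists2 y, Cc y & sle x y) ->
  (forall x, Eg phi (fg_mul c t') x -> Eg phi c x) ->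
  (forall zz, Eg phi t' zz -> Good t' (ind R (Vx zz))) ->
  forall x, Eg phi (fg_mul c t') x -> Good (fg_mul c t') (ind R (Vx x)).
Proof.
move=> Hgen HCE HEC Hlen IH x Hx.
have Hzero : x = z -> Good (fg_mul c t') (ind R (Vx x)).
  move=> ->; apply: (Good_ext (f := fun _ => 0)) => [xi|]; last exact: Good_zero.
  by rewrite ind_V0.
case: (HEC _ (Hlen _ Hx)) => y Cy Hxy.
case: (HCE _ Cy) => Hy [y0|[r [Hr [Hpr Hyr]]]].
  by apply: Hzero; apply: sle_z; rewrite -y0.
case: (Hx) => Hxi [x0|[s [Hs [Hps Hxs]]]]; first exact: Hzero.
case: (classic (x = z)) => Hxz; first exact: Hzero.
have Hxr : sle x (r · r°) := sle_trans Hxy Hyr.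
set zz := r° · x · r.
have Izz : idem zz by rewrite /zz; exact: idem_conj'.
have Ezz : r · zz · r° = x by rewrite /zz conj_back'.
have Hzz0 : zz <> z by move=> E; apply: Hxz; rewrite -Ezz E m0r m0l.
have Hrs : r° · s <> z.
  move=> E; apply: Hzz0.
  have -> : zz = r° · ((s · s°) · x) · r.
    by rewrite /zz (icomm (idem_ss s) Hxi) -Hxs.
  by rewrite !mA E !m0l.
have Hzt : Eg phi t' zz.
  split => //; right; exists (r° · s); split => //; split.
    by rewrite (phi_mul Hgr Hrs) (phi_star Hgr Hr) Hpr Hps fg_mulKl.
  rewrite star_mul star_star.
  have := conj_mon r° Hxi (idem_ss s) Hxs; rewrite star_star -/zz.
  by rewrite !mA.
case: (IH _ Hzt) => w0 [Hw0 E0].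
exists (LR_mul phi (xdelta R y c) w0); split.
  by apply: gen_mul => //; apply: gen_base; apply: Hgen.
move=> t'' xi; rewrite /xdelta eval_mul1 eval_single.
have Hzr : sle zz (r° · r).
  by have := conj_sle (r := r°) Hxi; rewrite star_star; apply.
case E : (fg_mul c t' == t'').
  have E' : t' == fg_mul (fg_inv c) t'' by rewrite -fg_mul_eq.
  rewrite (@tphi_ext A S phi R _ _ (ind R (Vx zz))).
    by rewrite -Hpr tphi_conj // Ezz.
  move=> e; rewrite E0 eval_single E'.
  rewrite -Hpr -(phi_star Hgr Hr).
  have Hyr' : sle y (r°° · r°) by rewrite star_star.
  rewrite (tphi_conj Hgr R (nz_star Hr) Hy Hyr') star_star.
  rewrite ind_VM //; last exact: idem_conj'.
  congr (ind R (Vx _) e).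
  rewrite /zz; have := conj_mul r° Hy Hxi; rewrite star_star => ->.
  by rewrite (icomm Hy Hxi) -Hxy.
rewrite (@tphi_ext A S phi R _ _ (fun _ => 0)); last first.
  move=> e; rewrite E0 eval_single.
  have -> : (t' == fg_mul (fg_inv c) t'') = false by rewrite -fg_mul_eq E.
  by rewrite mulr0.
by rewrite /tphi; case: (pdec _).
Qed.

End Gen.

Local Open Scope ring_scope.

Section Main.
Variable A : eqType.
Variable S : invsg.
Variable phi : S -> FG A.
Variable R : comPzRingType.
Variables C Cinv : A -> S -> Prop.
Hypothesis Hgr : pure_grading (@fg_mul A) (fg_one A) phi.
Hypothesis Hlen : forall s t : FG A, fg_len (fg_mul s t) = (fg_len s + fg_len t)%N ->
     forall x, Eg phi (fg_mul s t) x -> Eg phi s x.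
Hypothesis HC1 : forall a x, C a x -> Eg phi (fg_gen a) x.
Hypothesis HC2 : forall a x, Eg phi (fg_gen a) x -> exists2 y, C a y & sle x y.
Hypothesis HCi1 : forall a x, Cinv a x -> Eg phi (fg_geninv a) x.
Hypothesis HCi2 : forall a x, Eg phi (fg_geninv a) x -> exists2 y, Cinv a y & sle x y.
Local Notation "a · b" := (@smul S a b) (at level 40, left associativity).
Local Notation "a °" := (@sstar S a) (at level 2, format "a °").
Local Notation z := (szero S).

Lemma reduced_tail (l : A * bool) w : reducedb (l :: w) -> reducedb w.
Proof. by case: w => // m w /andP[]. Qed.

Lemma cons_red_nc (l : A * bool) w : reducedb (l :: w) -> cons_red l w = l :: w.
Proof. by case: w => //= m w /andP[/negbTE ->]. Qed.

Lemma Gen n : forall t : FG A, fg_len t = n -> forall x, Eg phi t x ->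
  Good phi C Cinv t (ind R (Vx x)).
Proof.
elim: n => [|n IH] [[|[a b] w] Hr] //= Hn x Hx.
  have Ht : exist (fun w => reducedb w) [::] Hr = fg_one A by apply: val_inj.
  rewrite Ht in Hx *.
  exists (xdelta R x (fg_one A)); split => //.
  by apply: gen_base; left; exists x; case: Hx.
have Hw := reduced_tail Hr.
set t' : FG A := exist _ w Hw.
have Hn' : fg_len t' = n by rewrite /fg_len /=; case: Hn.
have IH' := IH t' Hn'.
clear Hn; case: b Hr Hx => Hr Hx.
- have Et : exist (fun w => reducedb w) ((a, true) :: w) Hr = fg_mul (fg_gen a) t'.
    by apply: val_inj; rewrite /= cons_red_nc.
  have Hl : fg_len (fg_mul (fg_gen a) t') = (fg_len (fg_gen a) + fg_len t')%N.
    by rewrite -Et.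
  rewrite Et in Hx *.
  apply: (@Good_step A S phi R C Cinv Hgr _ (C a)) => //.
  + by move=> y Cy; right; left; exists a, y.
  + exact: HC1.
  + exact: HC2.
  + exact: Hlen.
- have Et : exist (fun w => reducedb w) ((a, false) :: w) Hr = fg_mul (fg_geninv a) t'.
    by apply: val_inj; rewrite /= cons_red_nc.
  have Hl : fg_len (fg_mul (fg_geninv a) t') = (fg_len (fg_geninv a) + fg_len t')%N.
    by rewrite -Et.
  rewrite Et in Hx *.
  apply: (@Good_step A S phi R C Cinv Hgr _ (Cinv a)) => //.
  + by move=> y Cy; right; right; exists a, y.
  + exact: HCi1.
  + exact: HCi2.
  + exact: Hlen.
Qed.

End Main.

Local Open Scope ring_scope.

Lemma In_map (T U : Type) (f : T -> U) (l : seq T) p :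
  List.In p (map f l) -> exists q, f q = p /\ List.In q l.
Proof.
elim: l => //= a l IH [<-|/IH [q [E Hq]]]; first by exists a; split => //; left.
by exists q; split => //; right.
Qed.

Lemma In_map2 (T U : Type) (f : T -> U) (l : seq T) q :
  List.In q l -> List.In (f q) (map f l).
Proof. by elim: l => //= a l IH [->|/IH]; [left|right]. Qed.

Lemma In_cat (T : Type) (l l' : seq T) p : List.In p (l ++ l') -> List.In p l \/ List.In p l'.
Proof. by elim: l => /= [|a l IH]; [right | case=> [->|/IH [H|H]]; [left; left|left; right|right]]. Qed.

Section Mt.
Variable A : eqType.
Variable S : invsg.
Variable phi : S -> FG A.
Variable R : comPzRingType.
Local Notation "a · b" := (@smul S a b) (at level 40, left associativity).
Local Notation z := (szero S).

Definition Mt (t : FG A) (f : (S -> Prop) -> R) :=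
  exists l : seq (R * S), (forall p, List.In p l -> Eg phi t p.2) /\
    forall xi, f xi = \sum_(p <- l) p.1 * ind R (Vx p.2) xi.

Lemma Mt_ext t f f' : (forall xi, f xi = f' xi) -> Mt t f -> Mt t f'.
Proof. by move=> H [l [Hl E]]; exists l; split => // xi; rewrite -H. Qed.

Lemma Mt_zero t : Mt t (fun _ => 0).
Proof. by exists [::]; split => // xi; rewrite big_nil. Qed.

Lemma Mt_ind t x : Eg phi t x -> Mt t (ind R (Vx x)).
Proof.
move=> Hx; exists [:: (1, x)]; split; first by move=> p [<-|].
by move=> xi; rewrite big_cons big_nil /= mul1r addr0.
Qed.

Lemma Mt_add t f f' : Mt t f -> Mt t f' -> Mt t (fun xi => f xi + f' xi).
Proof.
move=> [l [Hl E]] [l' [Hl' E']]; exists (l ++ l'); split.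
  by move=> p Hp; case: (In_cat Hp) => [/Hl|/Hl'].
by move=> xi; rewrite big_cat E E'.
Qed.

Lemma Mt_scale t r f : Mt t f -> Mt t (fun xi => r * f xi).
Proof.
move=> [l [Hl E]]; exists [seq (r * p.1, p.2) | p <- l]; split.
  move=> p Hp; case: (In_map Hp) => q [Eq Hq]. rewrite -Eq. exact: (Hl q Hq).
by move=> xi; rewrite big_map E mulr_sumr; apply: eq_bigr => p _; rewrite mulrA.
Qed.

Lemma Eg_down t x y : Eg phi t x -> idem y -> Eg phi t (x · y).
Proof.
move=> [Hx Hc] Hy; split; first exact: idemM.
case: Hc => [->|[s [Hs [Hps Hxs]]]]; first by left; rewrite m0l.
right; exists s; split => //; split => //.
exact: sle_trans (sle_mulr Hx Hy) Hxs.
Qed.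

Lemma sum_mulV (l : seq (R * S)) y xi : (forall p, List.In p l -> idem p.2) -> idem y ->
  (\sum_(p <- l) p.1 * ind R (Vx p.2) xi) * ind R (Vx y) xi =
  \sum_(p <- [seq (q.1, q.2 · y) | q <- l]) p.1 * ind R (Vx p.2) xi.
Proof.
elim: l => [|p l IH] Hl Hy; first by rewrite !big_nil mul0r.
rewrite /= !big_cons mulrDl (IH (fun q Hq => Hl q (or_intror Hq)) Hy).
by rewrite -mulrA (ind_VM _ _ (Hl p (or_introl erefl)) Hy).
Qed.

Lemma Mt_mulV t f y : Mt t f -> Mt t (fun xi => f xi * ind R (Vx y) xi).
Proof.
move=> [l [Hl E]].
case: (classic (idem y)) => Hy; last first.
  apply: (Mt_ext (f := fun _ => 0)); last exact: Mt_zero.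
  by move=> xi; rewrite ind_Vnidem ?mulr0.
exists [seq (p.1, p.2 · y) | p <- l]; split.
  move=> p Hp; case: (In_map Hp) => q [Eq Hq]; rewrite -Eq; apply: Eg_down => //; exact: Hl.
move=> xi; rewrite E sum_mulV // => p /Hl []; done.
Qed.

Lemma Mt_mul t f g : Mt t f -> Mt t g -> Mt t (fun xi => f xi * g xi).
Proof.
move=> Hf [l [Hl E]].
apply: (Mt_ext (f := fun xi => \sum_(p <- l) p.1 * (f xi * ind R (Vx p.2) xi))).
  by move=> xi; rewrite E mulr_sumr; apply: eq_bigr => p _; rewrite mulrCA.
elim: l {Hl E} => [|p l IH].
  by apply: (Mt_ext (f := fun _ => 0)) => [xi|]; rewrite ?big_nil //; exact: Mt_zero.
apply: (Mt_ext (f := fun xi => p.1 * (f xi * ind R (Vx p.2) xi) +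
                 \sum_(q <- l) q.1 * (f xi * ind R (Vx q.2) xi))).
  by move=> xi; rewrite big_cons.
by apply: Mt_add => //; apply: Mt_scale; apply: Mt_mulV.
Qed.

Lemma Mt_sub t f g : Mt t f -> Mt t g -> Mt t (fun xi => f xi - g xi).
Proof.
move=> Hf Hg; apply: (Mt_ext (f := fun xi => f xi + (-1) * g xi)).
  by move=> xi; rewrite mulN1r.
by apply: Mt_add => //; apply: Mt_scale.
Qed.

End Mt.

Local Open Scope ring_scope.

Section Compact.
Variable A : eqType.
Variable S : invsg.
Variable phi : S -> FG A.
Variable R : comPzRingType.

Lemma Mt_basicA t x0 (xs : seq S) : Eg phi t x0 ->
  Mt phi t (ind R (fun eta => tight eta /\ eta x0 /\ forall x, List.In x xs -> eta x)).
Proof.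
move=> Hx0; elim: xs => [|x xs IH].
  apply: Mt_ext (Mt_ind R Hx0) => xi; apply: ind_eq; rewrite /Vx; split.
    by case=> T F; split => //; split.
  by case=> T [F _].
apply: Mt_ext (Mt_mulV x IH) => xi; rewrite ind_and; apply: ind_eq; split.
  case=> [[T [F H]] [_ Fx]]; split => //; split => // y /= [<-|/H] //.
case=> T [F H]; split; first by split => //; split => // y Hy; apply: H; right.
by split => //; apply: H; left.
Qed.

Lemma Mt_basic t x0 (xs ys : seq S) : Eg phi t x0 ->
  Mt phi t (ind R (fun eta => tight eta /\ eta x0 /\ inB xs ys eta)).
Proof.
move=> Hx0; elim: ys => [|y ys IH].
  apply: Mt_ext (Mt_basicA xs Hx0) => xi; apply: ind_eq; rewrite /inB; split.
    by case=> T [F H]; split => //; split => //; split.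
  by case=> T [F [H _]].
apply: Mt_ext (Mt_sub IH (Mt_mulV y IH)) => xi; rewrite ind_diff; apply: ind_eq; split.
  case=> [[T [F [H1 H2]]] NV]; split => //; split => //; split => // y' /= [<-|/H2] //.
  by move=> Fy; apply: NV.
case=> T [F [H1 H2]]; split.
  by split => //; split => //; split => // y' Hy'; apply: H2; right.
by case=> _ Fy; apply: (H2 y) => //; left.
Qed.

Lemma Mt_union t (I : Type) (O : I -> (S -> Prop) -> Prop) (s : list I) :
  (forall i, Mt phi t (ind R (O i))) ->
  Mt phi t (ind R (fun eta => exists i, List.In i s /\ O i eta)).
Proof.
move=> HO; elim: s => [|i s IH].
  apply: Mt_ext (Mt_zero phi R t) => xi; symmetry; apply: indF; by case=> ? [].
apply: Mt_ext (Mt_sub (Mt_add (HO i) IH) (Mt_mul (HO i) IH)) => xi.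
rewrite ind_or; apply: ind_eq; split.
  case=> [Oi|[j [Hj Oj]]]; first by exists i; split => //; left.
  by exists j; split => //; right.
case=> j [[<-|Hj] Oj]; first by left.
by right; exists j.
Qed.

Lemma Mt_compact t (K : (S -> Prop) -> Prop) : compactT K -> openT K ->
  (forall xi, K xi -> Dg phi t xi) -> Mt phi t (ind R K).
Proof.
move=> HC [HKt HKo] HKD.
pose I := {xi : S -> Prop | K xi}.
have Hex : forall i : I, exists p : S * (seq S * seq S),
    Eg phi t p.1 /\ proj1_sig i p.1 /\ inB p.2.1 p.2.2 (proj1_sig i) /\
    forall eta, tight eta -> inB p.2.1 p.2.2 eta -> K eta.
  move=> [xi Kxi] /=.
  case: (HKo _ Kxi) => xs [ys [Hin Hsub]].
  case: (HKD _ Kxi) => _ [x0 [Hx0 Fx0]].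
  by exists (x0, (xs, ys)).
pose pick i := proj1_sig (constructive_indefinite_description _ (Hex i)).
have Hpick : forall i, Eg phi t (pick i).1 /\ proj1_sig i (pick i).1 /\
    inB (pick i).2.1 (pick i).2.2 (proj1_sig i) /\
    forall eta, tight eta -> inB (pick i).2.1 (pick i).2.2 eta -> K eta.
  move=> i; exact: (proj2_sig (constructive_indefinite_description _ (Hex i))).
pose O i eta := tight eta /\ eta (pick i).1 /\ inB (pick i).2.1 (pick i).2.2 eta.
have HOo : forall i, openT (O i).
  move=> i; split; first by move=> eta [].
  move=> eta [T [F [H1 H2]]]; exists ((pick i).1 :: (pick i).2.1), (pick i).2.2.
  split.
    split => // y /= [<-|/H1] //.
  move=> eta' T' [H1' H2']; split => //; split; first by apply: H1'; left.
  by split => // y Hy; apply: H1'; right.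
have HOc : forall xi, K xi -> exists i, O i xi.
  move=> xi Kxi; exists (exist _ xi Kxi).
  case: (Hpick (exist _ xi Kxi)) => _ [/= F [Hin _]].
  by split => //; case: (HKD _ Kxi).
case: (HC I O HOo HOc) => s Hs.
apply: (Mt_ext (f := ind R (fun eta => exists i, List.In i s /\ O i eta))).
  move=> xi; apply: ind_eq; split.
    case=> i [_ [T [_ Hin]]]; case: (Hpick i) => _ [_ [_ H]]; exact: H.
  by move=> Kxi; case: (Hs _ Kxi) => i Hi Oi; exists i.
apply: Mt_union => i.
case: (Hpick i) => Hx0 _.
exact: Mt_basic.
Qed.

End Compact.

Lemma Lc_Mt (A : eqType) (S : invsg) (phi : S -> FG A) (R : comPzRingType) (t : FG A) (f : (S -> Prop) -> R) :
  Lc_in phi t f -> Mt phi t f.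
Proof.
case=> l [Hl E]; apply: (Mt_ext (f := fun xi => \sum_(p <- l) p.1 * ind R p.2 xi))%R.
  by move=> xi; rewrite E.
elim: l Hl {E} => [|p l IH] Hl.
  by apply: (Mt_ext (f := fun _ => 0%R)) => [xi|]; rewrite ?big_nil //; exact: Mt_zero.
apply: (Mt_ext (f := fun xi => p.1 * ind R p.2 xi + \sum_(q <- l) q.1 * ind R q.2 xi))%R.
  by move=> xi; rewrite big_cons.
apply: Mt_add; last by apply: IH => q Hq; apply: Hl; right.
apply: Mt_scale; case: (Hl p (or_introl erefl)) => HC [HO HD].
exact: Mt_compact.
Qed.

Theorem mainTheorem17 (A : eqType) (S : invsg) (phi : S -> FG A)
  (R : comPzRingType) (C Cinv : A -> S -> Prop) :
  strongly_Estar_unitary S ->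
  pure_grading (@fg_mul A) (fg_one A) phi ->
  (forall s t : FG A, fg_len (fg_mul s t) = (fg_len s + fg_len t)%N ->
     forall x, Eg phi (fg_mul s t) x -> Eg phi s x) ->
  (forall a x, C a x -> Eg phi (fg_gen a) x) ->
  (forall a x, Eg phi (fg_gen a) x -> exists2 y, C a y & sle x y) ->
  (forall a x, Cinv a x -> Eg phi (fg_geninv a) x) ->
  (forall a x, Eg phi (fg_geninv a) x -> exists2 y, Cinv a y & sle x y) ->
  forall z : LRelt S A R, LR_valid phi z ->
    exists w : LRelt S A R,
      generated phi (@LR_gens S A R C Cinv) w /\ LR_eval w = LR_eval z.
Proof.
move=> _ Hgr Hlen HC1 HC2 HCi1 HCi2.
have Hgood : forall (t : FG A) (f : (S -> Prop) -> R), Mt phi t f -> Good phi C Cinv t f.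
  move=> t f [l [Hl E]].
  apply: (Good_ext (f := fun xi => \sum_(p <- l) p.1 * ind R (Vx p.2) xi)%R).
    by move=> xi; rewrite E.
  elim: l Hl {E} => [|p l IH] Hl.
    by apply: (Good_ext (f := fun _ => 0%R)) => [xi|]; rewrite ?big_nil //; exact: Good_zero.
  apply: (Good_ext (f := fun xi => p.1 * ind R (Vx p.2) xi + \sum_(q <- l) q.1 * ind R (Vx q.2) xi))%R.
    by move=> xi; rewrite big_cons.
  apply: Good_add; last by apply: IH => q Hq; apply: Hl; right.
  apply: Good_scale.
  exact: (Gen R Hgr Hlen HC1 HC2 HCi1 HCi2 (erefl _) (Hl p (or_introl erefl))).
elim=> [|[t f] z IH] Hz.
  by exists [::]; split; first exact: gen_zero.
have [w1 [Hw1 E1]] : Good phi C Cinv t f.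
  by apply: Hgood; apply: Lc_Mt; exact: (Hz (t, f) (or_introl erefl)).
have [w2 [Hw2 E2]] := IH (fun p Hp => Hz p (or_intror Hp)).
exists (LR_add w1 w2); split; first exact: gen_add.
apply: functional_extensionality => t'; apply: functional_extensionality => xi.
rewrite /LR_add eval_cat E1 E2; symmetry; exact: eval_cons.
Qed.
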